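(* Let $(K,v)$ be a henselian field and $(K(x)|K,v)$ an immediate extension such that $x$ is a pseudo-limit of a pseudo-Cauchy sequence of transcendental type in $(K,v)$. Then $(K,v)\prec_\exists (K(x),v)^h$ in $\mathcal{L}_{\operatorname{VF}}$.
   Context: An extension is immediate if value group and residue field do not change. A pseudo-Cauchy sequence $(x_\alpha)_{\alpha<\lambda}$ ($\lambda$ a limit ordinal) in $(K,v)$ is a sequence such that $v(x_\gamma-x_\beta)>v(x_\beta-x_\alpha)$ for all sufficiently large $\alpha<\beta<\gamma<\lambda$; $x$ is a pseudo-limit if $v(x-x_\alpha)$ is eventually strictly increasing and equals $v(x_{\alpha+1}-x_\alpha)$ eventually. It is of transcendental type if for every $f\in K[X]$ the sequence $vf(x_\alpha)$ is eventually constant. $(K(x),v)^h$ is a henselization of $(K(x),v)$. $\mathcal{L}_{\operatorname{VF}}=\{+,-,\cdot,{}^{-1},0,1,\mathcal{O}\}$ with $\mathcal{O}(a,b)$ iff $va\ge vb$; $\prec_\exists$ means existentially closed. *)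

(* Defs.v *)
(* Valued fields are represented by a field together with a
   (Prop-valued) valuation ring; v a >= v b is the L_VF predicate O(a,b). *)
From HB Require Import structures.
From mathcomp Require Import all_boot all_order all_algebra.
Set Implicit Arguments. Unset Strict Implicit. Unset Printing Implicit Defensive.
Import Order.TTheory GRing.Theory Num.Theory.
Local Open Scope ring_scope.

Section ValuedFields.
Variable F : fieldType.
Variable O : F -> Prop.

Definition valuation_ring : Prop :=
  [/\ O 0, O 1,
      (forall a b, O a -> O b -> O (a + b)) /\
      (forall a, O a -> O (- a)),
      (forall a b, O a -> O b -> O (a * b)) &
      (forall a, a != 0 -> O a \/ O a^-1)].

(* Ov a b  <->  v a >= v b   (the predicate O(a,b) of L_VF) *)
Definition Ov (a b : F) : Prop :=
  (b = 0 /\ a = 0) \/ (b <> 0 /\ O (a / b)).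

Definition veq (a b : F) : Prop := Ov a b /\ Ov b a.
Definition vlt (a b : F) : Prop := Ov b a /\ ~ Ov a b.

Definition in_max (a : F) : Prop := vlt 1 a.

Definition henselian : Prop :=
  forall (p : {poly F}) (a : F),
    p \is monic -> (forall i, O p`_i) -> O a ->
    in_max p.[a] -> ~ in_max (p^`()).[a] ->
    exists b, [/\ O b, p.[b] = 0 & in_max (b - a)].
End ValuedFields.

Definition valued_ext (K L : fieldType) (OK : K -> Prop) (OL : L -> Prop)
  (iota : {rmorphism K -> L}) : Prop :=
  forall a, OK a <-> OL (iota a).

Definition generated_by (K L : fieldType) (iota : {rmorphism K -> L}) (x : L) :=
  forall y : L, exists f g : {poly K},
    (map_poly iota g).[x] != 0 /\ y = (map_poly iota f).[x] / (map_poly iota g).[x].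

(* immediate: same value group and same residue field *)
Definition immediate (K L : fieldType) (OK : K -> Prop) (OL : L -> Prop)
  (iota : {rmorphism K -> L}) : Prop :=
  (forall y : L, y != 0 -> exists a : K, veq OL y (iota a)) /\
  (forall y : L, OL y -> exists a : K, OK a /\ in_max OL (y - iota a)).

(* Index sets: a well-ordered nonempty type with no greatest element, i.e.
   (a type order-isomorphic to) a limit ordinal. *)
Definition limit_index (d : Order.disp_t) (I : orderType d) : Prop :=
  [/\ well_founded (fun a b : I => (a < b)%O),
      inhabited I &
      forall a : I, exists b : I, (a < b)%O].

Definition is_succ (d : Order.disp_t) (I : orderType d) (a b : I) : Prop :=
  (a < b)%O /\ forall c : I, (a < c)%O -> (b <= c)%O.

Section PCS.
Variables (d : Order.disp_t) (I : orderType d).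

Definition pseudo_cauchy (K : fieldType) (OK : K -> Prop) (s : I -> K) : Prop :=
  exists a0 : I, forall a b c : I,
    (a0 <= a)%O -> (a < b)%O -> (b < c)%O -> vlt OK (s b - s a) (s c - s b).

Definition transcendental_type (K : fieldType) (OK : K -> Prop) (s : I -> K) : Prop :=
  forall f : {poly K}, exists a0 : I, forall a : I,
    (a0 <= a)%O -> veq OK f.[s a] f.[s a0].

Definition pseudo_limit (K L : fieldType) (OL : L -> Prop)
  (iota : {rmorphism K -> L}) (s : I -> K) (y : L) : Prop :=
  (exists a0 : I, forall a b : I, (a0 <= a)%O -> (a < b)%O ->
      vlt OL (y - iota (s a)) (y - iota (s b))) /\
  (exists a0 : I, forall a b : I, (a0 <= a)%O -> is_succ a b ->
      veq OL (y - iota (s a)) (iota (s b - s a))).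
End PCS.

Definition henselization (L H : fieldType) (OL : L -> Prop) (OH : H -> Prop)
  (j : {rmorphism L -> H}) : Prop :=
  [/\ valuation_ring OH, henselian OH, valued_ext OL OH j &
      forall (M : fieldType) (OM : M -> Prop) (k : {rmorphism L -> M}),
        valuation_ring OM -> henselian OM -> valued_ext OL OM k ->
        exists h : {rmorphism H -> M},
          [/\ valued_ext OH OM h, (forall y, h (j y) = k y) &
              forall h' : {rmorphism H -> M},
                valued_ext OH OM h' -> (forall y, h' (j y) = k y) ->
                forall z, h' z = h z]].

Inductive vf_term (K : Type) : Type :=
  | TVar of nat
  | TConst of K
  | TZero | TOne
  | TAdd of vf_term K & vf_term K
  | TSub of vf_term K & vf_term K
  | TOpp of vf_term K
  | TMul of vf_term K & vf_term K
  | TInv of vf_term K.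

Inductive vf_qf (K : Type) : Type :=
  | FEq of vf_term K & vf_term K
  | FO of vf_term K & vf_term K
  | FNot of vf_qf K
  | FAnd of vf_qf K & vf_qf K
  | FOr of vf_qf K & vf_qf K.

Section Semantics.
Variables (K : Type) (M : fieldType) (OM : M -> Prop) (c : K -> M) (e : nat -> M).

Fixpoint eval_term (t : vf_term K) : M :=
  match t with
  | TVar n => e n
  | TConst a => c a
  | TZero => 0
  | TOne => 1
  | TAdd t1 t2 => eval_term t1 + eval_term t2
  | TSub t1 t2 => eval_term t1 - eval_term t2
  | TOpp t1 => - eval_term t1
  | TMul t1 t2 => eval_term t1 * eval_term t2
  | TInv t1 => (eval_term t1)^-1   (* 0^-1 = 0 *)
  end.

Fixpoint holds (f : vf_qf K) : Prop :=
  match f with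
  | FEq t1 t2 => eval_term t1 = eval_term t2
  | FO t1 t2 => Ov OM (eval_term t1) (eval_term t2)
  | FNot f1 => ~ holds f1
  | FAnd f1 f2 => holds f1 /\ holds f2
  | FOr f1 f2 => holds f1 \/ holds f2
  end.
End Semantics.

(* (K, OK) ≺∃ (M, OM) in L_VF, where c : K -> M is the embedding:
   every existential formula with parameters in K true in M is true in K. *)
Definition ex_closed (K M : fieldType) (OK : K -> Prop) (OM : M -> Prop)
  (c : K -> M) : Prop :=
  forall phi : vf_qf K,
    (exists e : nat -> M, holds OM c e phi) ->
    (exists e : nat -> K, holds OK id e phi).

(* Main.v *)
From HB Require Import structures.
From mathcomp Require Import all_boot all_order all_algebra.
From mathcomp Require Import boolp classical_sets filter.
From mathcomp Require Import ring zify.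
From Stdlib Require Import Classical ClassicalEpsilon ProofIrrelevance FunctionalExtensionality.
Require Import Defs.
Set Implicit Arguments. Unset Strict Implicit. Unset Printing Implicit Defensive.
Import Order.TTheory GRing.Theory Num.Theory.
Local Open Scope ring_scope.


Section Val.
Variables (F : fieldType) (O : F -> Prop).
Hypothesis vO : valuation_ring O.

Lemma O0 : O 0. Proof. by case: vO. Qed.
Lemma O1 : O 1. Proof. by case: vO. Qed.
Lemma OD a b : O a -> O b -> O (a + b). Proof. by case: vO => _ _ [h _] _ _; apply: h. Qed.
Lemma ON a : O a -> O (- a). Proof. by case: vO => _ _ [_ h] _ _; apply: h. Qed.
Lemma OM a b : O a -> O b -> O (a * b). Proof. by case: vO => _ _ _ h _; apply: h. Qed.
Lemma OV a : a != 0 -> O a \/ O a^-1. Proof. by case: vO => _ _ _ _ h; apply: h. Qed.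
Lemma ONE a : O (- a) <-> O a.
Proof. by split => h; [rewrite -(opprK a)|]; apply: ON. Qed.

Local Notation Ov := (Ov O).
Local Notation veq := (veq O).
Local Notation vlt := (vlt O).

Lemma Ov0r a : Ov a 0 <-> a = 0.
Proof. by split=> [[[_ ->]|[]]|->]; [|by []|left]. Qed.

Lemma Ov0l b : Ov 0 b.
Proof.
have [->|nb] := eqVneq b 0; first by left.
by right; split; [apply/eqP|rewrite mul0r; exact: O0].
Qed.

Lemma OvE a b : b != 0 -> (Ov a b <-> O (a / b)).
Proof. by move=> nb; split=> [[[/eqP]|[]]|h]; [rewrite (negbTE nb)|by []|right; split=> //; apply/eqP]. Qed.

Lemma Ov_refl a : Ov a a.
Proof.
have [->|na] := eqVneq a 0; first exact: Ov0l.
by apply/OvE => //; rewrite divff //; exact: O1.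
Qed.

Lemma Ov_trans a b c : Ov a b -> Ov b c -> Ov a c.
Proof.
have [->|nc] := eqVneq c 0.
  by move=> h /Ov0r eb; move: h; rewrite eb => /Ov0r ->; exact: Ov0l.
have [eb|nb] := eqVneq b 0.
  by move=> h1 _; move: h1; rewrite eb => /Ov0r ->; exact: Ov0l.
move=> /(OvE _ nb) h1 /(OvE _ nc) h2; apply/OvE => //.
have -> : a / c = (a / b) * (b / c) by rewrite mulrA divfK.
exact: OM.
Qed.

Lemma Ov_total a b : Ov a b \/ Ov b a.
Proof.
have [->|nb] := eqVneq b 0; first by right; exact: Ov0l.
have [->|na] := eqVneq a 0; first by left; exact: Ov0l.
have nab : a / b != 0 by rewrite mulf_neq0 // invr_eq0.
case: (OV nab) => h; first by left; apply/OvE.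
by right; apply/OvE => //; rewrite invf_div in h.
Qed.

Lemma Ov_add a b c : Ov a c -> Ov b c -> Ov (a + b) c.
Proof.
have [->|nc] := eqVneq c 0.
  by move=> /Ov0r -> /Ov0r ->; rewrite addr0; exact: Ov0l.
move=> /(OvE _ nc) h1 /(OvE _ nc) h2; apply/OvE => //.
by rewrite mulrDl; exact: OD.
Qed.

Lemma Ov_oppl a b : Ov (- a) b <-> Ov a b.
Proof.
have [->|nc] := eqVneq b 0; first by rewrite !Ov0r; split=> [/eqP|->]; [rewrite oppr_eq0 => /eqP|rewrite oppr0].
by rewrite !(OvE _ nc) mulNr ONE.
Qed.

Lemma Ov_oppr a b : Ov a (- b) <-> Ov a b.
Proof.
have [->|nc] := eqVneq b 0; first by rewrite oppr0.
have nc' : - b != 0 by rewrite oppr_eq0.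
by rewrite (OvE _ nc) (OvE _ nc') invrN mulrN ONE.
Qed.

Lemma Ov_mul a b c d : Ov a b -> Ov c d -> Ov (a * c) (b * d).
Proof.
have [->|nb] := eqVneq b 0.
  by move=> /Ov0r -> _; rewrite mul0r; exact: Ov0l.
have [->|nd] := eqVneq d 0.
  by move=> _ /Ov0r ->; rewrite mulr0; exact: Ov0l.
move=> /(OvE _ nb) h1 /(OvE _ nd) h2; apply/OvE; first by rewrite mulf_neq0.
have -> : a * c / (b * d) = (a / b) * (c / d) by rewrite invfM; ring.
exact: OM.
Qed.

Lemma Ov_cancel a b c : c != 0 -> Ov (a * c) (b * c) -> Ov a b.
Proof.
move=> nc; have [->|nb] := eqVneq b 0.
  by rewrite mul0r => /Ov0r/eqP; rewrite mulf_eq0 (negbTE nc) orbF => /eqP ->; exact: Ov0l.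
rewrite (OvE _ (mulf_neq0 nb nc)) (OvE _ nb).
have -> : a * c / (b * c) = a / b by rewrite invfM; field; apply/andP.
done.
Qed.

Lemma Ov_neq0 a b : Ov a b -> b = 0 -> a = 0.
Proof. by move=> h eb; move: h; rewrite eb => /Ov0r. Qed.

Lemma veq_refl a : veq a a. Proof. by split; apply: Ov_refl. Qed.
Lemma veq_sym a b : veq a b -> veq b a. Proof. by case. Qed.
Lemma veq_trans a b c : veq a b -> veq b c -> veq a c.
Proof. by move=> [h1 h2] [h3 h4]; split; apply: Ov_trans; eassumption. Qed.

Lemma nOv_vlt a b : ~ Ov a b -> vlt a b.
Proof. by move=> h; split=> //; case: (Ov_total a b). Qed.

Lemma vlt_Ov a b c : vlt a b -> Ov c b -> vlt a c.
Proof.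
move=> [h1 h2] h3; split; first exact: Ov_trans h3 h1.
move=> h4; apply: h2; exact: Ov_trans h4 h3.
Qed.

Lemma Ov_vlt a b c : Ov b a -> vlt b c -> vlt a c.
Proof.
move=> h1 [h2 h3]; split; first exact: Ov_trans h2 h1.
move=> h4; apply: h3; exact: Ov_trans h1 h4.
Qed.

Lemma vlt_trans a b c : vlt a b -> vlt b c -> vlt a c.
Proof. by move=> h1 [h2 _]; apply: vlt_Ov h1 h2. Qed.

Lemma vlt_veq a b a' b' : veq a a' -> veq b b' -> vlt a b -> vlt a' b'.
Proof.
move=> [e1 e2] [e3 e4] h.
apply: (vlt_Ov _ e4); exact: (Ov_vlt e1 h).
Qed.

Lemma vlt_irr a : ~ vlt a a. Proof. by move=> [h1 h2]; apply: h2. Qed.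

Lemma vlt_neq0 a b : vlt a b -> a != 0.
Proof. by move=> [_ h]; apply/eqP => ea; apply: h; rewrite ea; exact: Ov0l. Qed.

Lemma vlt_add a b : vlt a b -> veq (a + b) a.
Proof.
move=> [h1 h2]; split.
  exact: (Ov_add (Ov_refl a) h1).
apply: NNPP => h3.
have e : a = (a + b) + - b by rewrite addrK.
case: (Ov_total (a + b) b) => h4.
  apply: h2; rewrite {1}e.
  exact: (Ov_add h4 (proj2 (Ov_oppl _ _) (Ov_refl b))).
apply: h3; rewrite {1}e.
exact: (Ov_add (Ov_refl _) (proj2 (Ov_oppl _ _) h4)).
Qed.

Lemma vlt_addr a c : vlt a c -> veq (c + a) a.
Proof. by move=> h; rewrite addrC; apply: vlt_add. Qed.

Lemma vlt_mul a b c d : vlt a b -> Ov d c -> c != 0 -> vlt (a * c) (b * d).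
Proof.
move=> [h1 h2] h3 nc; split; first exact: Ov_mul.
move=> h4; apply: h2; apply: (Ov_cancel nc).
apply: Ov_trans h4 _; apply: Ov_mul => //; exact: Ov_refl.
Qed.

Lemma vlt_mulr a b c : vlt a b -> c != 0 -> vlt (a * c) (b * c).
Proof. by move=> h nc; apply: vlt_mul => //; exact: Ov_refl. Qed.

Lemma veq_mul a b c d : veq a b -> veq c d -> veq (a * c) (b * d).
Proof. by move=> [h1 h2] [h3 h4]; split; apply: Ov_mul. Qed.

Lemma Ov_exp a b n : Ov a b -> Ov (a ^+ n) (b ^+ n).
Proof.
move=> h; elim: n => [|n IH]; first by rewrite !expr0; exact: Ov_refl.
by rewrite !exprS; apply: Ov_mul.
Qed.

Lemma vlt_exp a b n : vlt a b -> vlt (a ^+ n.+1) (b ^+ n.+1).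
Proof.
move=> h; elim: n => [|n IH]; first by rewrite !expr1.
rewrite exprS (exprS b); apply: vlt_mul => //; first by case: IH.
exact: vlt_neq0 IH.
Qed.

Lemma veq0 a b : veq a b -> a = 0 -> b = 0.
Proof. by move=> [_ h] ea; apply: Ov_neq0 h ea. Qed.

End Val.

Section Transfer.
Variables (K L : fieldType) (OK : K -> Prop) (OL : L -> Prop) (f : {rmorphism K -> L}).
Hypothesis ve : valued_ext OK OL f.

Lemma Ov_map a b : Ov OK a b <-> Ov OL (f a) (f b).
Proof.
rewrite /Ov -(rmorph0 f); split.
  case=> [[-> ->]|[nb h]]; first by left.
  right; split; first by move/fmorph_inj.
  by rewrite -fmorphV -rmorphM; apply/ve.
case=> [[/fmorph_inj -> /fmorph_inj ->]|[nb h]]; first by left.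
right; split; first by move=> eb; apply: nb; rewrite eb.
by apply/ve; rewrite rmorphM fmorphV.
Qed.

Lemma veq_map a b : veq OK a b <-> veq OL (f a) (f b).
Proof. by rewrite /veq !Ov_map. Qed.
Lemma vlt_map a b : vlt OK a b <-> vlt OL (f a) (f b).
Proof. by rewrite /vlt !Ov_map. Qed.
End Transfer.

Section Val2.
Variables (F : fieldType) (O : F -> Prop).
Hypothesis vO : valuation_ring O.
Lemma Ov_veq a b a' b' : veq O a a' -> veq O b b' -> Ov O a b -> Ov O a' b'.
Proof.
move=> [_ h1] [h2 _] h; apply: (Ov_trans vO h1); exact: (Ov_trans vO h h2).
Qed.
End Val2.


Section Ev.
Variables (d : Order.disp_t) (I : orderType d).
Definition ev (P : I -> Prop) := exists a0 : I, forall a, (a0 <= a)%O -> P a.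

Lemma ev_and P Q : ev P -> ev Q -> ev (fun a => P a /\ Q a).
Proof.
move=> [a0 h0] [a1 h1]; exists (Order.max a0 a1) => a.
by rewrite ge_max => /andP[/h0 ? /h1 ?].
Qed.

Lemma ev_mono (P Q : I -> Prop) : (forall a, P a -> Q a) -> ev P -> ev Q.
Proof. by move=> PQ [a0 h]; exists a0 => a /h /PQ. Qed.

Lemma ev_app (P Q : I -> Prop) : ev (fun a => P a -> Q a) -> ev P -> ev Q.
Proof. by move=> h1 h2; apply: ev_mono (ev_and h1 h2) => a [f /f]. Qed.
End Ev.

Section KL.
Variables (K L : fieldType) (OL : L -> Prop).
Hypothesis vL : valuation_ring OL.
Variable (iota : {rmorphism K -> L}).
Variables (d : Order.disp_t) (I : orderType d) (y : I -> L) (x : L).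
Hypothesis TT : forall f : {poly K}, exists a0, forall a, (a0 <= a)%O ->
  veq OL (map_poly iota f).[y a] (map_poly iota f).[y a0].
Hypothesis PL : exists a1, forall a b, (a1 <= a)%O -> (a < b)%O ->
  vlt OL (x - y a) (x - y b).
Hypothesis nomax : forall a : I, exists b, (a < b)%O.

Local Notation Ov := (Ov OL).
Local Notation veq := (veq OL).
Local Notation vlt := (vlt OL).
Local Notation ev := (@ev d I).

Definition SI (T : I -> L) := ev (fun a => forall b, (a < b)%O -> vlt (T a) (T b)).

Lemma dich (g : {poly K}) :
  ev (fun a => (map_poly iota g).[y a] = 0) \/
  exists c, c != 0 /\ ev (fun a => veq (map_poly iota g).[y a] c).
Proof.
have [a0 h] := TT g.
have [e|ne] := eqVneq (map_poly iota g).[y a0] 0.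
  left; exists a0 => a /h; rewrite e => /(veq_sym) h1.
  exact: (veq0 h1 erefl).
by right; exists (map_poly iota g).[y a0]; split => //; exists a0.
Qed.

Definition D a := x - y a.

Lemma D_SI : SI D.
Proof. by have [a1 h] := PL; exists a1 => a ha b hb; apply: h. Qed.

Lemma D_neq0 : ev (fun a => D a != 0).
Proof.
have [a1 h] := D_SI; exists a1 => a ha.
have [b hb] := nomax a; exact: vlt_neq0 (h a ha b hb).
Qed.

Lemma SI_shift (T : I -> L) a0 : (forall a, (a0 <= a)%O -> forall b, (a < b)%O -> vlt (T a) (T b)) -> SI T.
Proof. by move=> h; exists a0. Qed.

Lemma le_lt_trans' (a b c : I) : (a <= b)%O -> (b < c)%O -> (a <= c)%O.
Proof. by move=> h1 h2; apply: le_trans h1 (ltW h2). Qed.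

Lemma cD_SI (c : L) k : c != 0 -> SI (fun a => c * D a ^+ k.+1).
Proof.
move=> nc; have [a1 h] := D_SI; exists a1 => a ha b hb.
rewrite ![c * _]mulrC; apply: vlt_mulr => //; apply: vlt_exp => //; exact: h.
Qed.

Lemma veq_SI (T T' : I -> L) : ev (fun a => veq (T a) (T' a)) -> SI T' -> SI T.
Proof.
move=> [a0 h0] [a1 h1]; exists (Order.max a0 a1) => a; rewrite ge_max => /andP[ha0 ha1] b hb.
apply: (vlt_veq vL (veq_sym (h0 a ha0)) (veq_sym (h0 b (le_lt_trans' ha0 hb)))).
exact: h1.
Qed.

Section Terms.
Variable f : {poly K}.
Definition G i := map_poly iota (f^`N(i)).
Definition T i a := (G i).[y a] * D a ^+ i.

Lemma T_SI i c : c != 0 -> ev (fun a => veq (G i.+1).[y a] c) -> SI (T i.+1).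
Proof.
move=> nc hc; apply: (veq_SI (T' := fun a => c * D a ^+ i.+1)); last exact: cD_SI.
by apply: ev_mono hc => a h; apply: (veq_mul vL) => //; exact: (veq_refl vL).
Qed.

Lemma PC i j ci cj : (i < j)%N -> ci != 0 -> cj != 0 ->
  ev (fun a => veq (G i).[y a] ci) -> ev (fun a => veq (G j).[y a] cj) ->
  ev (fun a => vlt (T i a) (T j a)) \/ ev (fun a => vlt (T j a) (T i a)).
Proof.
move=> ij nci ncj hi hj.
have ek : j = i + (j - i).-1.+1 by move: ij; clear; lia.
set k := (j - i).-1 in ek.
pose E a := cj * D a ^+ k.+1.
have [a2 h2] := cD_SI k ncj.
have hij := ev_and (ev_and hi hj) D_neq0.
have [a3 h3] := hij.
have hTi : forall a, (a3 <= a)%O -> veq (T i a) (ci * D a ^+ i).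
  move=> a /h3 [[h _] _]; apply: veq_mul => //; exact: (veq_refl vL).
have hTj : forall a, (a3 <= a)%O -> veq (T j a) (E a * D a ^+ i).
  move=> a /h3 [[_ h] _].
  have eD : D a ^+ j = D a ^+ k.+1 * D a ^+ i by rewrite {1}ek exprD mulrC.
  rewrite /E /T eD mulrA; apply: (veq_mul vL); last exact: (veq_refl vL).
  apply: (veq_mul vL) => //; exact: (veq_refl vL).
have nDi : forall a, (a3 <= a)%O -> D a ^+ i != 0.
  by move=> a /h3 [_ h]; rewrite expf_neq0.
case: (classic (exists a4, (Order.max a2 a3 <= a4)%O /\ Ov (E a4) ci)) => [[a4 [ha4 hE]]|hno].
  left; have [a5 h5] := nomax a4.
  exists a5 => a ha; move: ha4; rewrite ge_max => /andP[ha42 ha43].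
  have ha4a : (a4 < a)%O by apply: lt_le_trans h5 ha.
  have ha3 : (a3 <= a)%O by apply: le_trans ha43 (ltW ha4a).
  have hv : vlt ci (E a) by apply: (Ov_vlt vL hE); exact: h2.
  apply: (vlt_veq vL (veq_sym (hTi a ha3)) (veq_sym (hTj a ha3))).
  exact: vlt_mulr (nDi a ha3).
right; exists (Order.max a2 a3) => a; rewrite ge_max => /andP[ha2 ha3].
have hv : vlt (E a) ci.
  apply: nOv_vlt => // hE; apply: hno; exists a; split => //.
  by rewrite ge_max ha2 ha3.
apply: (vlt_veq vL (veq_sym (hTj a ha3)) (veq_sym (hTi a ha3))).
exact: vlt_mulr (nDi a ha3).
Qed.

Lemma PC' i j ci cj : i != j -> ci != 0 -> cj != 0 ->
  ev (fun a => veq (G i).[y a] ci) -> ev (fun a => veq (G j).[y a] cj) ->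
  ev (fun a => vlt (T i a) (T j a)) \/ ev (fun a => vlt (T j a) (T i a)).
Proof.
move=> nij nci ncj hi hj; case: (ltngtP i j) => ij.
- exact: (PC ij nci ncj hi hj).
- by case: (PC ij ncj nci hj hi) => h; [right|left].
- by rewrite ij eqxx in nij.
Qed.

Definition Sum (l : seq nat) a := \sum_(i <- l) T i a.

Lemma claim (l : seq nat) : uniq l -> all (fun i => 0 < i)%N l ->
  ev (fun a => Sum l a = 0) \/
  exists h, [/\ h \in l, (0 < h)%N, exists ch, ch != 0 /\ ev (fun a => veq (G h).[y a] ch)
            & ev (fun a => veq (Sum l a) (T h a))].
Proof.
elim: l => [|i l IH] /=.
  move=> _ _; left; have [a1 _] := PL; exists a1 => a _; by rewrite /Sum big_nil.
move=> /andP[ni ul] /andP[pi al].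
have eS : forall a, Sum (i :: l) a = T i a + Sum l a by move=> a; rewrite /Sum big_cons.
case: (dich (f^`N(i))) => [h0|[ci [nci hci]]].
  have e0 : ev (fun a => Sum (i :: l) a = Sum l a).
    by apply: ev_mono h0 => a h; rewrite eS /T /G h mul0r add0r.
  case: (IH ul al) => [hl|[h [hl hp hc hs]]].
    by left; apply: ev_mono (ev_and e0 hl) => a [-> ->].
  right; exists h; split => //; first by rewrite inE hl orbT.
  by apply: ev_mono (ev_and e0 hs) => a [->].
case: (IH ul al) => [hl|[h [hl hp [ch [nch hch]] hs]]].
  right; exists i; split => //; first by rewrite inE eqxx.
    by exists ci.
  by apply: ev_mono hl => a h; rewrite eS h addr0; exact: (veq_refl vL).
have nih : i != h by apply/eqP => eih; move: ni; rewrite eih hl.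
case: (PC' nih nci nch hci hch) => hv.
  right; exists i; split => //; first by rewrite inE eqxx.
    by exists ci.
  apply: ev_mono (ev_and hv hs) => a [h1 h2]; rewrite eS.
  apply: (vlt_add vL); apply: (vlt_Ov vL h1); by case: h2.
right; exists h; split => //; first by rewrite inE hl orbT.
  by exists ch.
apply: ev_mono (ev_and hv hs) => a [h1 h2]; rewrite eS.
apply: (veq_trans vL _ h2); apply: (vlt_addr vL).
exact: (vlt_veq vL (veq_sym h2) (veq_refl vL _) h1).
Qed.

Lemma taylorT a : (map_poly iota f).[x] =
  (map_poly iota f).[y a] + Sum (index_iota 1 (size f).+1) a.
Proof.
have -> : x = y a + D a by rewrite /D addrC subrK.
rewrite (@nderiv_taylor_wide _ (size f).+1); last 2 first.
- exact: mulrC.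
- by rewrite size_map_poly.
rewrite -(big_mkord xpredT (fun i : nat => (map_poly iota f)^`N(i).[y a] * D a ^+ i)).
rewrite big_ltn // /Sum expr0 mulr1 nderivn0; congr (_ + _).
by apply: eq_bigr => i _; rewrite /T /G nderivn_map.
Qed.

Lemma veq_opp u : veq (- u) u.
Proof. by split; [apply/(Ov_oppl vL); exact: (Ov_refl vL)|apply/(Ov_oppr vL); exact: (Ov_refl vL)]. Qed.

Lemma KLmain : ev (fun a => veq (map_poly iota f).[x] (map_poly iota f).[y a]).
Proof.
set g := map_poly iota f.
have hl : uniq (index_iota 1 (size f).+1) by apply: iota_uniq.
have hp : all (fun i => 0 < i)%N (index_iota 1 (size f).+1).
  by apply/allP => i; rewrite mem_index_iota => /andP[].
case: (claim hl hp) => [h0|[h [_ hpos [ch [nch hch]] hs]]].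
  apply: ev_mono h0 => a h0; rewrite /g (taylorT a) h0 addr0; exact: (veq_refl vL).
have SIS : SI (Sum (index_iota 1 (size f).+1)).
  apply: (veq_SI hs); case: h hpos hch {hs} => // h _ hch; exact: T_SI hch.
have [a0 h0] := TT f.
set beta := (map_poly iota f).[y a0] in h0.
suff hb : veq g.[x] beta.
  exists a0 => a ha; apply: (veq_trans vL hb); apply: veq_sym; exact: h0.
have [a1 h1] := SIS.
set a := Order.max a0 a1.
have ha0 : (a0 <= a)%O by rewrite le_max lexx.
have ha1 : (a1 <= a)%O by rewrite le_max lexx orbT.
have [b hab] := nomax a.
have hb0 : (a0 <= b)%O by apply: le_trans ha0 (ltW hab).
have hS := h1 a ha1 b hab.
have eSa : Sum (index_iota 1 (size f).+1) a = g.[x] + - g.[y a] by rewrite (taylorT a) addrAC subrr add0r.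
have eSb : Sum (index_iota 1 (size f).+1) b = g.[x] + - g.[y b] by rewrite (taylorT b) addrAC subrr add0r.
rewrite eSa eSb in hS.
have ea := h0 a ha0; have eb := h0 b hb0.
split; apply: NNPP => hn.
- have hv := nOv_vlt vL hn.
  have va : veq (g.[x] + - g.[y a]) g.[x].
    apply: (vlt_add vL); apply: (vlt_veq vL (veq_refl vL _) _ hv).
    exact: veq_sym (veq_trans vL (veq_opp _) ea).
  have vb : veq (g.[x] + - g.[y b]) g.[x].
    apply: (vlt_add vL); apply: (vlt_veq vL (veq_refl vL _) _ hv).
    exact: veq_sym (veq_trans vL (veq_opp _) eb).
  by apply: (vlt_irr (vlt_veq vL va vb hS)).
- have hv := nOv_vlt vL hn.
  have va : veq (g.[x] + - g.[y a]) beta.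
    apply: (veq_trans vL _ (veq_trans vL (veq_opp _) ea)); apply: (vlt_addr vL).
    apply: (vlt_veq vL _ (veq_refl vL _) hv).
    exact: veq_sym (veq_trans vL (veq_opp _) ea).
  have vb : veq (g.[x] + - g.[y b]) beta.
    apply: (veq_trans vL _ (veq_trans vL (veq_opp _) eb)); apply: (vlt_addr vL).
    apply: (vlt_veq vL _ (veq_refl vL _) hv).
    exact: veq_sym (veq_trans vL (veq_opp _) eb).
  by apply: (vlt_irr (vlt_veq vL va vb hS)).
Qed.
End Terms.
End KL.


Record ultra (I : Type) (U : (I -> Prop) -> Prop) : Prop := {
 uT : U (fun _ => True);
 uI : forall P Q, U P -> U Q -> U (fun a => P a /\ Q a);
 uS : forall P Q : I -> Prop, (forall a, P a -> Q a) -> U P -> U Q;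
 uN : ~ U (fun _ => False);
 uU : forall P, U P \/ U (fun a => ~ P a) }.

Lemma exists_ultra (I : Type) (F : (I -> Prop) -> Prop) :
  F (fun _ => True) ->
  (forall P Q, F P -> F Q -> F (fun a => P a /\ Q a)) ->
  (forall P Q : I -> Prop, (forall a, P a -> Q a) -> F P -> F Q) ->
  ~ F (fun _ => False) ->
  exists U, ultra U /\ forall P, F P -> U P.
Proof.
move=> FT FI FS FN.
have PF : ProperFilter (F : set_system I).
  apply: Build_ProperFilter_ex.
    move=> P FP; apply: NNPP => nP; apply: FN; apply: FS FP => a Pa.
    by apply: nP; exists a.
  split.
  - by rewrite /setT; apply: FS FT.
  - by move=> P Q FP FQ; apply: FS (FI P Q FP FQ) => a [].
  - by move=> P Q PQ; apply: FS.
have [G [UG FG]] := ultraFilterLemma PF.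
exists G; split => //.
have GF : Filter G by apply: filter_filter.
split.
- exact: filterT.
- move=> P Q GP GQ; apply: (filterS _ (filterI GP GQ)); by move=> a [].
- by move=> P Q PQ; apply: filterS.
- move=> h; have PG : ProperFilter G by exact: ultra_proper.
  by apply: (@filter_not_empty _ G PG).
- by move=> P; have := in_ultra_setVsetC P UG.
Qed.


Section Ultrapower.
Variables (K : fieldType) (I : Type) (U : (I -> Prop) -> Prop).
Hypothesis UU : ultra U.

Lemma aeW (P : I -> Prop) : (forall a, P a) -> U P.
Proof. by move=> h; apply: (uS UU _ (uT UU)). Qed.

Definition ueq (f g : I -> K) := U (fun a => f a = g a).

Lemma ueq_refl f : ueq f f.
Proof. exact: aeW. Qed.
Lemma ueq_sym f g : ueq f g -> ueq g f.
Proof. by apply: (uS UU) => a ->. Qed.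
Lemma ueq_trans f g h : ueq f g -> ueq g h -> ueq f h.
Proof. by move=> H1 H2; apply: (uS UU _ (uI UU H1 H2)) => a [-> ->]. Qed.

Definition canon (f : I -> K) : I -> K :=
  epsilon (inhabits (fun _ : I => (0 : K))) (ueq f).

Lemma canonE f : ueq f (canon f).
Proof. apply: epsilon_spec; exists f; exact: ueq_refl. Qed.

Lemma canon_eq f g : ueq f g -> canon f = canon g.
Proof.
move=> fg; rewrite /canon; congr epsilon.
apply: funext => h; apply: propext; split => H.
  exact: ueq_trans (ueq_sym fg) H.
exact: ueq_trans fg H.
Qed.

Lemma canon_idem f : canon (canon f) = canon f.
Proof. by apply: canon_eq; apply: ueq_sym; apply: canonE. Qed.

Record ult := Ult { rep : I -> K; repP : canon rep = rep }.

Definition mk f := Ult (canon_idem f).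

Lemma ult_eq z w : rep z = rep w -> z = w.
Proof.
case: z => z zP; case: w => w wP /= zw; subst w.
by rewrite (proof_irrelevance _ zP wP).
Qed.

Lemma mk_rep z : mk (rep z) = z.
Proof. by apply: ult_eq; rewrite /= repP. Qed.

Lemma mkP f g : ueq f g -> mk f = mk g.
Proof. by move=> fg; apply: ult_eq => /=; apply: canon_eq. Qed.

Lemma rep_mk f : ueq (rep (mk f)) f.
Proof. exact: ueq_sym (canonE f). Qed.

Lemma ueq_ult z w : ueq (rep z) (rep w) -> z = w.
Proof. by move=> h; rewrite -(mk_rep z) -(mk_rep w); apply: mkP. Qed.

Lemma ult_ueq z w : z = w -> ueq (rep z) (rep w).
Proof. by move=> ->; exact: ueq_refl. Qed.

Definition ultU (UU' : ultra U) := ult.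
Local Notation T := (ultU UU).
HB.instance Definition _ := gen_eqMixin T.
HB.instance Definition _ := gen_choiceMixin T.

Definition uzero : T := mk (fun _ => 0).
Definition uone : T := mk (fun _ => 1).
Definition uopp (z : T) : T := mk (fun a => - rep z a).
Definition uadd (z w : T) : T := mk (fun a => rep z a + rep w a).
Definition umul (z w : T) : T := mk (fun a => rep z a * rep w a).
Definition uinv (z : T) : T := mk (fun a => (rep z a)^-1).

Ltac ae_comb :=
  repeat match goal with
  | H1 : U _, H2 : U _ |- _ => have := uI UU H1 H2; clear H1 H2; move=> ?
  end.

Ltac ae_fin := ae_comb;
  match goal with H : U _ |- U _ => apply: (uS UU _ H) => a; clear H end.

Ltac rw_reps := repeat match goal with
  | H : _ /\ _ |- _ => case: H => ? ?
  | H : rep _ _ = _ |- _ => (rewrite -> H in * ); clear H end.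

Ltac ueqs := repeat match goal with
  | |- context [rep (mk ?f)] => have := rep_mk f; rewrite /ueq; move: (rep (mk f)) => ? ?
  end.

Ltac collect :=
  repeat match goal with
  | |- context [rep (mk ?f)] =>
     lazymatch goal with
     | _ : ueq (rep (mk f)) f |- _ => fail
     | _ => have := rep_mk f; move=> ?
     end
  end.

Ltac usolve := apply: ueq_ult; rewrite ?/uadd ?/umul ?/uopp ?/uinv ?/uzero ?/uone;
  collect; unfold ueq in *; ae_fin; move=> ?; rw_reps.

Lemma uaddA : associative uadd.
Proof. by move=> x y z; usolve; rewrite addrA. Qed.
Lemma uaddC : commutative uadd.
Proof. by move=> x y; usolve; rewrite addrC. Qed.
Lemma uadd0 : left_id uzero uadd.
Proof. by move=> x; usolve; rewrite add0r. Qed.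
Lemma uaddN : left_inverse uzero uopp uadd.
Proof. by move=> x; usolve; rewrite addNr. Qed.

HB.instance Definition _ := GRing.isZmodule.Build T uaddA uaddC uadd0 uaddN.

Lemma umulA : associative umul.
Proof. by move=> x y z; usolve; rewrite mulrA. Qed.
Lemma umulC : commutative umul.
Proof. by move=> x y; usolve; rewrite mulrC. Qed.
Lemma umul1 : left_id uone umul.
Proof. by move=> x; usolve; rewrite mul1r. Qed.
Lemma umulD : left_distributive umul uadd.
Proof. by move=> x y z; usolve; rewrite mulrDl. Qed.
Lemma uone0 : uone != uzero.
Proof.
apply/negP => /eqP /ult_ueq; rewrite /uone /uzero => h.
have h1 := rep_mk (fun _ : I => 1 : K); have h2 := rep_mk (fun _ : I => 0 : K).
rewrite /ueq in h h1 h2; apply: (uN UU); ae_fin; move=> ?; rw_reps.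
by have /eqP := oner_neq0 K; apply.
Qed.

HB.instance Definition _ := GRing.Zmodule_isComNzRing.Build T umulA umulC umul1 umulD uone0.

Lemma ult_neq0 (z : T) : z != 0 -> U (fun a => rep z a != 0).
Proof.
move=> nz; case: (uU UU (fun a => rep z a != 0)) => // h; exfalso.
move/eqP: nz; apply; apply: ueq_ult.
have h2 := rep_mk (fun _ : I => 0 : K); rewrite /ueq in h2 *.
ae_fin; by move=> [/negP/negbNE/eqP -> ->].
Qed.

Lemma umulV (z : T) : z != 0 -> uinv z * z = 1.
Proof.
move=> /ult_neq0 nz.
change (umul (uinv z) z = uone).
apply: ueq_ult; rewrite /umul /uinv /uone; collect; unfold ueq in *.
ae_fin; move=> ?; rw_reps; by rewrite mulVf.
Qed.

Lemma uinv0 : uinv 0 = 0.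
Proof. change (uinv uzero = uzero); by usolve; rewrite invr0. Qed.

HB.instance Definition _ := GRing.ComNzRing_isField.Build T umulV uinv0.


Lemma U_and (P Q : I -> Prop) : U (fun a => P a /\ Q a) <-> U P /\ U Q.
Proof.
split; last by case; apply: (uI UU).
by move=> h; split; apply: (uS UU _ h) => a [].
Qed.

Lemma U_or (P Q : I -> Prop) : U (fun a => P a \/ Q a) <-> U P \/ U Q.
Proof.
split; last by case; apply: (uS UU) => a; [left|right].
move=> h; case: (uU UU P) => hP; first by left.
right; apply: (uS UU _ (uI UU h hP)) => a [[]] //.
Qed.

Lemma U_not (P : I -> Prop) : U (fun a => ~ P a) <-> ~ U P.
Proof.
split; last by case: (uU UU P).
move=> h1 h2; apply: (uN UU); apply: (uS UU _ (uI UU h1 h2)) => a [].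
by move=> /[apply].
Qed.

Lemma U_const (Pr : Prop) : U (fun _ => Pr) <-> Pr.
Proof.
split; last by move=> h; apply: aeW.
move=> h; apply: NNPP => nP; apply: (uN UU); apply: (uS UU _ h) => a.
exact: nP.
Qed.

Lemma U_congr (f g : I -> K) (P : K -> Prop) : ueq f g ->
  (U (fun a => P (f a)) <-> U (fun a => P (g a))).
Proof.
move=> h; split=> h1.
  by apply: (uS UU _ (uI UU h h1)) => a [<-].
by apply: (uS UU _ (uI UU h h1)) => a [->].
Qed.

Lemma U_congr2 (f g f' g' : I -> K) (P : K -> K -> Prop) : ueq f g -> ueq f' g' ->
  (U (fun a => P (f a) (f' a)) <-> U (fun a => P (g a) (g' a))).
Proof.
move=> h h'; split=> h1.
  by apply: (uS UU _ (uI UU (uI UU h h') h1)) => a [[<- <-]].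
by apply: (uS UU _ (uI UU (uI UU h h') h1)) => a [[-> ->]].
Qed.

Lemma rep0 : ueq (rep (0 : T)) (fun _ => 0). Proof. exact: rep_mk. Qed.
Lemma rep1 : ueq (rep (1 : T)) (fun _ => 1). Proof. exact: rep_mk. Qed.
Lemma repD (z w : T) : ueq (rep (z + w)) (fun a => rep z a + rep w a). Proof. exact: rep_mk. Qed.
Lemma repN (z : T) : ueq (rep (- z)) (fun a => - rep z a). Proof. exact: rep_mk. Qed.
Lemma repM (z w : T) : ueq (rep (z * w)) (fun a => rep z a * rep w a). Proof. exact: rep_mk. Qed.
Lemma repV (z : T) : ueq (rep (z^-1)) (fun a => (rep z a)^-1). Proof. exact: rep_mk. Qed.

Lemma ueq_app (f g : I -> K) (h : K -> K) : ueq f g -> ueq (fun a => h (f a)) (fun a => h (g a)).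
Proof. by apply: (uS UU) => a ->. Qed.
Lemma ueq_app2 (f g f' g' : I -> K) (h : K -> K -> K) : ueq f g -> ueq f' g' ->
  ueq (fun a => h (f a) (f' a)) (fun a => h (g a) (g' a)).
Proof. by move=> e e'; apply: (uS UU _ (uI UU e e')) => a [-> ->]. Qed.

Lemma repB (z w : T) : ueq (rep (z - w)) (fun a => rep z a - rep w a).
Proof.
apply: ueq_trans (repD _ _) _; apply: (ueq_app2 (fun u v => u + v)).
  exact: ueq_refl.
exact: repN.
Qed.

Lemma repDiv (z w : T) : ueq (rep (z / w)) (fun a => rep z a / rep w a).
Proof.
apply: ueq_trans (repM _ _) _; apply: (ueq_app2 (fun u v => u * v)).
  exact: ueq_refl.
exact: repV.
Qed.

Lemma ult_eq0 (z : T) : z = 0 <-> U (fun a => rep z a = 0).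
Proof.
split=> [->|h]; first exact: rep0.
apply: ueq_ult; exact: ueq_trans h (ueq_sym rep0).
Qed.

Lemma ult_eqE (z w : T) : z = w <-> ueq (rep z) (rep w).
Proof. by split; [apply: ult_ueq|apply: ueq_ult]. Qed.

Variable OK : K -> Prop.
Hypothesis vK : valuation_ring OK.

Definition Ost (z : T) : Prop := U (fun a => OK (rep z a)).

Lemma Ov_ult (u w : T) : Ov Ost u w <-> U (fun a => Ov OK (rep u a) (rep w a)).
Proof.
rewrite /Ov U_or !U_and -ult_eq0 -ult_eq0 U_not -ult_eq0.
rewrite /Ost (U_congr OK (repDiv u w)).
by split; case=> [h|h]; [left|right|left|right].
Qed.

Definition diag (q : K) : T := mk (fun _ => q).

Lemma los_term (e : nat -> T) (t : vf_term K) :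
  ueq (rep (eval_term diag e t)) (fun a => eval_term id (fun n => rep (e n) a) t).
Proof.
elim: t => /=.
- move=> n; exact: ueq_refl.
- move=> q; exact: rep_mk.
- exact: rep0.
- exact: rep1.
- move=> t1 h1 t2 h2; apply: ueq_trans (repD _ _) _; exact: (ueq_app2 (fun u v => u + v)).
- move=> t1 h1 t2 h2; apply: ueq_trans (repB _ _) _; exact: (ueq_app2 (fun u v => u - v)).
- move=> t1 h1; apply: ueq_trans (repN _) _; exact: (ueq_app (fun u => - u)).
- move=> t1 h1 t2 h2; apply: ueq_trans (repM _ _) _; exact: (ueq_app2 (fun u v => u * v)).
- move=> t1 h1; apply: ueq_trans (repV _) _; exact: (ueq_app (fun u => u^-1)).
Qed.

Lemma los (e : nat -> T) (phi : vf_qf K) :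
  holds Ost diag e phi <-> U (fun a => holds OK id (fun n => rep (e n) a) phi).
Proof.
elim: phi => /=.
- move=> t1 t2; rewrite ult_eqE; split => h.
    exact: ueq_trans (ueq_sym (los_term e t1)) (ueq_trans h (los_term e t2)).
  exact: ueq_trans (los_term e t1) (ueq_trans h (ueq_sym (los_term e t2))).
- move=> t1 t2; rewrite Ov_ult.
  exact: (U_congr2 (Ov OK) (los_term e t1) (los_term e t2)).
- by move=> f1 h1; rewrite U_not h1.
- by move=> f1 h1 f2 h2; rewrite U_and h1 h2.
- by move=> f1 h1 f2 h2; rewrite U_or h1 h2.
Qed.


Lemma Ost_vr : valuation_ring Ost.
Proof.
rewrite /Ost; split.
- by apply/(U_congr OK rep0)/aeW => _; exact: O0.
- by apply/(U_congr OK rep1)/aeW => _; exact: O1.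
- split.
    move=> z w hz hw; apply/(U_congr OK (repD z w)).
    by apply: (uS UU _ (uI UU hz hw)) => a [h1 h2]; apply: OD.
  move=> z hz; apply/(U_congr OK (repN z)).
  by apply: (uS UU _ hz) => a h; apply: ON.
- move=> z w hz hw; apply/(U_congr OK (repM z w)).
  by apply: (uS UU _ (uI UU hz hw)) => a [h1 h2]; apply: OM.
- move=> z /ult_neq0 nz; rewrite (U_congr OK (repV z)) -U_or.
  by apply: (uS UU _ nz) => a /(OV vK).
Qed.

Lemma in_max_ult (z : T) : in_max Ost z <-> U (fun a => in_max OK (rep z a)).
Proof.
rewrite /in_max /vlt U_and !Ov_ult U_not.
rewrite (U_congr2 (Ov OK) (ueq_refl (rep z)) rep1).
rewrite (U_congr2 (Ov OK) rep1 (ueq_refl (rep z))).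
by [].
Qed.

Lemma ueq_appd (f g : I -> K) (h : I -> K -> K) : ueq f g ->
  ueq (fun a => h a (f a)) (fun a => h a (g a)).
Proof. by apply: (uS UU) => a ->. Qed.

Lemma rep_sum m (F : nat -> T) :
  ueq (rep (\sum_(i < m) F i)) (fun b => \sum_(i < m) rep (F i) b).
Proof.
elim: m => [|m IH].
  rewrite big_ord0; apply: ueq_trans rep0 _; apply: aeW => b; by rewrite big_ord0.
apply: ueq_trans (_ : ueq _ (rep (\sum_(i < m) F i + F m))) _.
  by rewrite big_ord_recr; exact: ueq_refl.
apply: ueq_trans (repD _ _) _.
apply: ueq_trans (ueq_app2 (fun u v => u + v) IH (ueq_refl _)) _.
by apply: aeW => b; rewrite big_ord_recr.
Qed.

Lemma ueq_sum m (F G : nat -> I -> K) : (forall i, (i < m)%N -> ueq (F i) (G i)) ->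
  ueq (fun b => \sum_(i < m) F i b) (fun b => \sum_(i < m) G i b).
Proof.
elim: m => [|m IH] h.
  by apply: aeW => b; rewrite !big_ord0.
apply: ueq_trans (_ : ueq _ (fun b => \sum_(i < m) F i b + F m b)) _.
  by apply: aeW => b; rewrite big_ord_recr.
apply: ueq_trans (_ : ueq _ (fun b => \sum_(i < m) G i b + G m b)) _; last first.
  by apply: aeW => b; rewrite big_ord_recr.
apply: (ueq_app2 (fun u v => u + v)); last exact: h.
by apply: IH => i /ltnW; apply: h.
Qed.

Lemma rep_exp (z : T) k : ueq (rep (z ^+ k)) (fun b => rep z b ^+ k).
Proof.
elim: k => [|k IH].
  by rewrite expr0; apply: ueq_trans rep1 _; apply: aeW => b; rewrite expr0.
rewrite exprS; apply: ueq_trans (repM _ _) _.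
apply: ueq_trans (ueq_app2 (fun u v => u * v) (ueq_refl _) IH) _.
by apply: aeW => b; rewrite exprS.
Qed.

Lemma rep_natmul (z : T) k : ueq (rep (z *+ k)) (fun b => rep z b *+ k).
Proof.
elim: k => [|k IH].
  by rewrite mulr0n; apply: ueq_trans rep0 _; apply: aeW => b; rewrite mulr0n.
rewrite mulrS; apply: ueq_trans (repD _ _) _.
apply: ueq_trans (ueq_app2 (fun u v => u + v) (ueq_refl _) IH) _.
by apply: aeW => b; rewrite mulrS.
Qed.

Lemma U_all m (P : nat -> I -> Prop) : (forall i, (i < m)%N -> U (P i)) ->
  U (fun b => forall i, (i < m)%N -> P i b).
Proof.
elim: m => [|m IH] h; first by apply: aeW.
have h1 := IH (fun i hi => h i (ltnW hi)).
apply: (uS UU _ (uI UU h1 (h m (ltnSn m)))) => b [H1 H2] i.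
rewrite ltnS leq_eqVlt => /orP[/eqP -> //|]; exact: H1.
Qed.

Definition cp n (r : {poly T}) (b : I) : {poly K} := \poly_(i < n) rep (r`_i) b.

Lemma horner_cp n (r : {poly T}) (z : T) : (size r <= n)%N ->
  ueq (rep r.[z]) (fun b => (cp n r b).[rep z b]).
Proof.
move=> hr; rewrite (horner_coef_wide z hr).
apply: ueq_trans (rep_sum n (fun i => r`_i * z ^+ i)) _.
apply: ueq_trans (_ : ueq _ (fun b => \sum_(i < n) rep (r`_i) b * rep z b ^+ i)) _.
  apply: (ueq_sum (F := fun i b => rep (r`_i * z ^+ i) b) (G := fun i b => rep (r`_i) b * rep z b ^+ i)) => i _; apply: ueq_trans (repM _ _) _.
  exact: ueq_app2 (fun u v => u * v) (ueq_refl _) (rep_exp _ _).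
apply: aeW => b; rewrite (horner_coef_wide _ (size_poly _ _)).
by apply: eq_bigr => i _; rewrite coef_poly ltn_ord.
Qed.

Hypothesis henK : henselian OK.

Lemma Ost_hens : henselian Ost.
Proof.
move=> p z mp hcoef hz hmax hder.
set n := size p.
have pn0 : p != 0 by apply: monic_neq0.
have n_gt0 : (0 < n)%N by rewrite size_poly_gt0.
have hlead : U (fun b => rep (p`_n.-1) b = 1).
  have e : p`_n.-1 = 1 by rewrite -lead_coefE; apply/eqP; rewrite -monicE.
  by rewrite e; exact: rep1.
have hmon : U (fun b => cp n p b \is monic).
  apply: (uS UU _ hlead) => b hb; rewrite monicE /lead_coef.
  rewrite size_poly_eq /cp ?coef_poly ?prednK // ?ltnSn ?hb ?oner_neq0 //.
  by rewrite leqnn.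
have hco : U (fun b => forall i, OK ((cp n p b)`_i)).
  apply: (uS UU _ (@U_all n _ (fun i _ => hcoef i))) => b h i.
  rewrite /cp coef_poly; case: ifP => hi; first exact: (h i hi).
  exact: O0.
have hder_size : (size p^`() <= n)%N by apply: ltnW; apply: lt_size_deriv.
have hderiv : U (fun b => (cp n p b)^`() = cp n p^`() b).
  have hh : forall i, (i < n)%N -> U (fun b => ((cp n p b)^`())`_i = (cp n p^`() b)`_i).
    move=> i hi; rewrite /cp.
    have e1 := rep_natmul (p`_i.+1) i.+1.
    apply: (uS UU _ (uI UU e1 rep0)) => b [h1 h2].
    rewrite coef_deriv !coef_poly hi -/n.
    case: ifP => h3; case: ifP => h4.
    - by rewrite h1.
    - by exfalso; move: h3 h4; clear; lia.
    - by exfalso; move: h3 h4; clear; lia.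
    - by rewrite h2 mul0rn.
  apply: (uS UU _ (U_all hh)) => b H; apply/polyP => i.
  case: (ltnP i n) => hi; first exact: H.
  rewrite coef_deriv /cp !coef_poly.
  case: ifP => h3; case: ifP => h4; try (exfalso; move: hi h3 h4; clear; lia).
  by rewrite mul0rn.
have hm1 : U (fun b => in_max OK (cp n p b).[rep z b]).
  by apply/(U_congr (in_max OK) (horner_cp z (leqnn n))); apply/in_max_ult.
have hm2 : U (fun b => ~ in_max OK ((cp n p b)^`()).[rep z b]).
  have h1 : U (fun b => ~ in_max OK (rep (p^`()).[z] b)) by apply/U_not; rewrite -in_max_ult.
  have h2 := horner_cp z hder_size.
  apply: (uS UU _ (uI UU (uI UU h1 h2) hderiv)) => b [[H1 H2] H3].
  by rewrite H3 -H2.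
pose Good b := [/\ cp n p b \is monic, forall i, OK ((cp n p b)`_i), OK (rep z b),
   in_max OK (cp n p b).[rep z b] & ~ in_max OK ((cp n p b)^`()).[rep z b]].
have hGood : U Good.
  apply: (uS UU _ (uI UU (uI UU (uI UU (uI UU hmon hco) hz) hm1) hm2)).
  by move=> b [[[[? ?] ?] ?] ?]; split.
pose Concl b c := [/\ OK c, (cp n p b).[c] = 0 & in_max OK (c - rep z b)].
pose bf b := epsilon (inhabits (0 : K)) (fun c => Good b -> Concl b c).
have hbf : U (fun b => Concl b (bf b)).
  apply: (uS UU _ hGood) => b hb; apply: (epsilon_spec (inhabits (0 : K)) (fun c => Good b -> Concl b c)) => //.
  case: hb => h1 h2 h3 h4 h5; have [c hc] := henK h1 h2 h3 h4 h5.
  by exists c.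
exists (mk bf); have hr := rep_mk bf.
split.
- rewrite /Ost (U_congr OK hr); by apply: (uS UU _ hbf) => b [].
- apply/ult_eq0; have h1 := horner_cp (mk bf) (leqnn n).
  apply: (uS UU _ (uI UU (uI UU h1 hr) hbf)) => b [[H1 H2] [_ H3 _]].
  by rewrite H1 H2.
- apply/in_max_ult; apply/(U_congr (in_max OK) (repB _ _)).
  apply: (uS UU _ (uI UU hr hbf)) => b [H1 [_ _ H3]].
  by rewrite H1.
Qed.

End Ultrapower.


Section Main.
Variables (K L : fieldType) (OK : K -> Prop) (OL : L -> Prop)
  (iota : {rmorphism K -> L}) (x : L) (d : Order.disp_t) (I : orderType d)
  (s : I -> K) (U : (I -> Prop) -> Prop) (UU : ultra U).

Record Hyps : Prop := {
  h_vK : valuation_ring OK;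
  h_vL : valuation_ring OL;
  h_ve : valued_ext OK OL iota;
  h_gen : generated_by iota x;
  h_nomax : forall a : I, exists b, (a < b)%O;
  h_tt : transcendental_type OK s;
  h_pl : pseudo_limit OL iota s x;
  h_tail : forall (P : I -> Prop) (a0 : I), (forall a, (a0 <= a)%O -> P a) -> U P }.

Variable HH : Hyps.
Local Notation T := (ultU K UU).

Definition Ex (f : {poly K}) := (map_poly iota f).[x].

Lemma ExB f g : Ex (f - g) = Ex f - Ex g. Proof. by rewrite /Ex rmorphB hornerD hornerN. Qed.
Lemma ExM f g : Ex (f * g) = Ex f * Ex g. Proof. by rewrite /Ex rmorphM hornerM. Qed.
Lemma ExD f g : Ex (f + g) = Ex f + Ex g. Proof. by rewrite /Ex rmorphD hornerD. Qed.
Lemma ExC c : Ex c%:P = iota c. Proof. by rewrite /Ex map_polyC hornerC. Qed.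

Lemma gen' (y : L) : exists pq : {poly K} * {poly K}, Ex pq.2 != 0 /\ y = Ex pq.1 / Ex pq.2.
Proof. by have [f [g [h1 h2]]] := h_gen HH y; exists (f, g). Qed.

Definition rp (y : L) : {poly K} * {poly K} := proj1_sig (constructive_indefinite_description _ (gen' y)).
Lemma rpP y : Ex (rp y).2 != 0 /\ y = Ex (rp y).1 / Ex (rp y).2.
Proof. exact: proj2_sig (constructive_indefinite_description _ (gen' y)). Qed.

Definition kf (y : L) : T := mk UU (fun a => (rp y).1.[s a] / (rp y).2.[s a]).

Lemma evU (P : I -> Prop) : ev P -> U P.
Proof. by move=> [a0 h]; apply: (h_tail HH h). Qed.

Lemma KLx f : ev (fun a => veq OL (Ex f) (iota f.[s a])).
Proof.
have vL := h_vL HH.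
have TT : forall f : {poly K}, exists a0, forall a, (a0 <= a)%O ->
  veq OL (map_poly iota f).[iota (s a)] (map_poly iota f).[iota (s a0)].
  move=> g; have [a0 h] := h_tt HH g; exists a0 => a ha.
  by rewrite !horner_map; apply/(veq_map (h_ve HH)); apply: h.
have PL : exists a1, forall a b, (a1 <= a)%O -> (a < b)%O ->
  vlt OL (x - iota (s a)) (x - iota (s b)).
  by have [[a1 h] _] := h_pl HH; exists a1.
have := KLmain vL TT PL (h_nomax HH) f.
by apply: ev_mono => a; rewrite /Ex horner_map.
Qed.

Lemma zero_ae f : Ex f = 0 -> U (fun a => f.[s a] = 0).
Proof.
move=> e; apply: evU; apply: ev_mono (KLx f) => a h.
rewrite e in h; have := veq0 h erefl; by move/eqP; rewrite fmorph_eq0 => /eqP.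
Qed.

Lemma nz_ev f : Ex f != 0 -> ev (fun a => f.[s a] != 0).
Proof.
move=> e; apply: ev_mono (KLx f) => a h.
apply/eqP => e2; move/eqP: e; apply; apply: (veq0 (veq_sym h)).
by rewrite e2 rmorph0.
Qed.

Lemma nz_ae f : Ex f != 0 -> U (fun a => f.[s a] != 0).
Proof.
move=> e; apply: evU; apply: ev_mono (KLx f) => a h.
apply/eqP => e2; move/eqP: e; apply; apply: (veq0 (veq_sym h)).
by rewrite e2 rmorph0.
Qed.

Lemma repr (y : L) f g : Ex g != 0 -> y = Ex f / Ex g ->
  ueq U (rep (kf y)) (fun a => f.[s a] / g.[s a]).
Proof.
move=> ng ey; have [ng0 ey0] := rpP y.
set f0 := (rp y).1 in ey0 *; set g0 := (rp y).2 in ng0 ey0 *.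
apply: (ueq_trans UU) (rep_mk UU _) _; rewrite -/f0 -/g0.
have e : Ex (f0 * g - f * g0) = 0.
  rewrite ExB !ExM; apply/eqP; rewrite subr_eq0; apply/eqP.
  have : Ex f0 / Ex g0 = Ex f / Ex g by rewrite -ey -ey0.
  by move/eqP; rewrite eqr_div // => /eqP.
apply: (uS UU _ (uI UU (uI UU (zero_ae e) (nz_ae ng0)) (nz_ae ng))) => a [[h1 h2] h3].
apply/eqP; rewrite eqr_div //; apply/eqP; apply/eqP; rewrite -subr_eq0.
by move: h1; rewrite hornerD hornerN !hornerM => ->.
Qed.

Lemma kB : zmod_morphism kf.
Proof.
move=> y1 y2; have [n1 e1] := rpP y1; have [n2 e2] := rpP y2.
set f1 := (rp y1).1 in n1 e1; set g1 := (rp y1).2 in n1 e1.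
set f2 := (rp y2).1 in n2 e2; set g2 := (rp y2).2 in n2 e2.
have n12 : Ex (g1 * g2) != 0 by rewrite ExM mulf_neq0.
have e12 : y1 - y2 = Ex (f1 * g2 - f2 * g1) / Ex (g1 * g2).
  rewrite e1 e2 ExB !ExM; field; apply/andP; split => //.
have r12 := repr n12 e12.
have r1 := repr n1 e1; have r2 := repr n2 e2.
apply/ult_eqE; apply: (ueq_trans UU) r12 _; apply: (ueq_sym UU); apply: (ueq_trans UU) (repB _ _) _.
apply: (uS UU _ (uI UU (uI UU (uI UU r1 r2) (nz_ae n1)) (nz_ae n2))) => a [[[h1 h2] h3] h4].
rewrite h1 h2 hornerD hornerN !hornerM; field.
by apply/andP; split.
Qed.

Lemma kM : multiplicative kf.
Proof.
split.
  move=> y1 y2; have [n1 e1] := rpP y1; have [n2 e2] := rpP y2.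
  set f1 := (rp y1).1 in n1 e1; set g1 := (rp y1).2 in n1 e1.
  set f2 := (rp y2).1 in n2 e2; set g2 := (rp y2).2 in n2 e2.
  have n12 : Ex (g1 * g2) != 0 by rewrite ExM mulf_neq0.
  have e12 : y1 * y2 = Ex (f1 * f2) / Ex (g1 * g2).
    by rewrite e1 e2 !ExM; field; apply/andP; split.
  have r12 := repr n12 e12.
  have r1 := repr n1 e1; have r2 := repr n2 e2.
  apply/ult_eqE; apply: (ueq_trans UU) r12 _; apply: (ueq_sym UU); apply: (ueq_trans UU) (repM _ _) _.
  apply: (uS UU _ (uI UU (uI UU (uI UU r1 r2) (nz_ae n1)) (nz_ae n2))) => a [[[h1 h2] h3] h4].
  rewrite h1 h2 !hornerM; field.
  by apply/andP; split.
have n1 : Ex 1 != 0 by rewrite /Ex rmorph1 hornerC oner_neq0.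
have e1 : (1 : L) = Ex 1 / Ex 1 by rewrite divff.
apply/ult_eqE; apply: (ueq_trans UU) (repr n1 e1) _; apply: (ueq_sym UU); apply: (ueq_trans UU) (rep1 _ UU) _.
by apply: (aeW UU) => a; rewrite hornerC divff // oner_neq0.
Qed.

HB.instance Definition _ := GRing.isZmodMorphism.Build L T kf kB.
HB.instance Definition _ := GRing.isMultiplicative.Build L T kf kM.

Lemma k_iota q : kf (iota q) = diag UU q.
Proof.
have n1 : Ex 1 != 0 by rewrite /Ex rmorph1 hornerC oner_neq0.
have e1 : iota q = Ex q%:P / Ex 1 by rewrite ExC /Ex rmorph1 hornerC divr1.
apply/ult_eqE; apply: (ueq_trans UU) (repr n1 e1) _; apply: (ueq_sym UU); apply: (ueq_trans UU) (rep_mk UU _) _.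
by apply: (aeW UU) => a; rewrite !hornerC divr1.
Qed.

Lemma k_ve : valued_ext OL (Ost (UU:=UU) OK) kf.
Proof.
have vL := h_vL HH; have vK := h_vK HH.
move=> y; have [ng ey] := rpP y.
set f := (rp y).1 in ey; set g := (rp y).2 in ng ey.
have r := repr ng ey.
have key : ev (fun a => OL y <-> OK (f.[s a] / g.[s a])).
  apply: ev_mono (ev_and (ev_and (KLx f) (KLx g)) (nz_ev ng)) => a [[hf hg] hn].
  have ng' : iota g.[s a] != 0 by rewrite fmorph_eq0.
  rewrite ey -(OvE _ _ ng) -(OvE _ _ hn) (Ov_map (h_ve HH)).
  split => h; first exact: (Ov_veq vL hf hg h).
  exact: (Ov_veq vL (veq_sym hf) (veq_sym hg) h).
rewrite /Ost (U_congr UU OK r); split => h.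
  by apply: evU; apply: ev_mono key => a [h1 _]; exact: h1.
apply: NNPP => hn; move: h; apply/(U_not UU); apply: evU.
by apply: ev_mono key => a [h1 h2] /h2.
Qed.
End Main.


Section Transfer2.
Variables (C : Type) (M N : fieldType) (OM : M -> Prop) (ON : N -> Prop) (hm : {rmorphism M -> N}).
Hypothesis ve : valued_ext OM ON hm.

Lemma eval_morph (c : C -> M) e t :
  hm (eval_term c e t) = eval_term (fun q => hm (c q)) (fun n => hm (e n)) t.
Proof.
elim: t => /=.
- by [].
- by [].
- exact: rmorph0.
- exact: rmorph1.
- by move=> t1 h1 t2 h2; rewrite rmorphD h1 h2.
- by move=> t1 h1 t2 h2; rewrite rmorphB h1 h2.
- by move=> t1 h1; rewrite rmorphN h1.
- by move=> t1 h1 t2 h2; rewrite rmorphM h1 h2.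
- by move=> t1 h1; rewrite fmorphV h1.
Qed.

Lemma holds_morph (c : C -> M) e phi :
  holds OM c e phi <-> holds ON (fun q => hm (c q)) (fun n => hm (e n)) phi.
Proof.
elim: phi => /=.
- move=> t1 t2; rewrite -!eval_morph; split=> [->//|]; exact: fmorph_inj.
- by move=> t1 t2; rewrite -!eval_morph (Ov_map ve).
- by move=> f1 h1; tauto.
- by move=> f1 h1 f2 h2; tauto.
- by move=> f1 h1 f2 h2; tauto.
Qed.
End Transfer2.

Theorem corollary3p8
  (K : fieldType) (OK : K -> Prop)
  (L : fieldType) (OL : L -> Prop) (iota : {rmorphism K -> L}) (x : L)
  (H : fieldType) (OH : H -> Prop) (j : {rmorphism L -> H})
  (d : Order.disp_t) (I : orderType d) (s : I -> K) :
  valuation_ring OK -> henselian OK ->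
  valuation_ring OL -> valued_ext OK OL iota ->
  generated_by iota x -> immediate OK OL iota ->
  limit_index I -> pseudo_cauchy OK s -> transcendental_type OK s ->
  pseudo_limit OL iota s x ->
  henselization OL OH j ->
  ex_closed OK OH (fun a => j (iota a)).
Proof.
move=> vK henK vL ve gen _ [_ [a00] nomax] _ tt pl [_ _ _ univ].
pose F (P : I -> Prop) := exists a0, forall a, (a0 <= a)%O -> P a.
have [U [UU FU]] : exists U, ultra U /\ forall P, F P -> U P.
  apply: exists_ultra.
  - by exists a00.
  - move=> P Q [a0 h0] [a1 h1]; exists (Order.max a0 a1) => a.
    by rewrite ge_max => /andP[/h0 ? /h1 ?].
  - by move=> P Q PQ [a0 h0]; exists a0 => a /h0 /PQ.
  - by move=> [a0 h0]; apply: (h0 a0).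
have HH : Hyps OK OL iota x s U.
  split => //.
  by move=> P a0 h; apply: FU; exists a0.
have [h [veh hjk _]] := univ _ _ (kf UU HH) (Ost_vr UU vK) (Ost_hens vK henK) (k_ve UU HH).
move=> phi [e he].
have he' := proj1 (holds_morph veh _ _ _) he.
have ec : (fun q => h (j (iota q))) = diag UU.
  apply: functional_extensionality => q; rewrite hjk. exact: (k_iota UU HH q).
rewrite /= ec in he'.
have := proj1 (los _ _ _) he'.
move=> hU; apply: NNPP => hno; apply: (uN UU); apply: (uS UU _ hU) => a ha.
by apply: hno; exists (fun n => rep (h (e n)) a).
Qed.
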